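(* Let $\tilde L$ be a minimum-size counterexample. Then there is a join-irreducible element $j$ of $\tilde L$ that is less than or equal to more than half of the meet-irreducible elements of $\tilde L$.
   Context: For a poset $P$, $x$ upper covers $y$ (and $y$ lower covers $x$) if $y<x$ with nothing strictly between. Join-irreducible: upper covers exactly one element; meet-irreducible: lower covers exactly one element. For $x\in P$, ${\uparrow}x=\{y: x\le y\}$. A counterexample is a finite lattice $L$ with $|L|>1$ in which every join-irreducible $j$ satisfies $|{\uparrow}j|>|L|/2$; a minimum-size counterexample is a counterexample $\tilde L$ such that no counterexample has fewer elements. *)

(* Defs.v *)
From HB Require Import structures.
From mathcomp Require Import all_boot all_order.
Set Implicit Arguments. Unset Strict Implicit. Unset Printing Implicit Defensive.
Import Order.TTheory.
Local Open Scope order_scope.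

Definition covers d (P : finPOrderType d) (x y : P) : bool :=
  (y < x) && [forall z : P, ~~ ((y < z) && (z < x))].

Definition join_irr d (P : finPOrderType d) (j : P) : bool :=
  #|[set y : P | covers j y]| == 1%N.

Definition meet_irr d (P : finPOrderType d) (m : P) : bool :=
  #|[set y : P | covers y m]| == 1%N.

Definition upset d (P : finPOrderType d) (x : P) : {set P} := [set y : P | x <= y].

(* counterexample: finite lattice with |L| > 1 in which every join-irreducible
   j satisfies |up j| > |L|/2, i.e. 2|up j| > |L| *)
Definition counterexample d (L : finLatticeType d) : Prop :=
  (1 < #|L|)%N /\ forall j : L, join_irr j -> (#|L| < 2 * #|upset j|)%N.

Definition min_counterexample d (L : finLatticeType d) : Prop :=
  counterexample L /\
  forall (d' : Order.disp_t) (L' : finLatticeType d'),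
    (#|L'| < #|L|)%N -> ~ counterexample L'.

(* Main.v *)
Require Import Defs.
From HB Require Import structures.
From mathcomp Require Import all_boot all_order.
From mathcomp Require Import zify.
Set Implicit Arguments. Unset Strict Implicit. Unset Printing Implicit Defensive.
Import Order.TTheory.
Local Open Scope order_scope.

Section Gen.
Variables (d : Order.disp_t) (P : finPOrderType d).

Definition dn (x : P) := [set z : P | z <= x].

Lemma dn_lt (v w : P) : v < w -> (#|dn v| < #|dn w|)%N.
Proof.
move=> vw; apply: proper_card; apply/properP; split.
  by apply/subsetP=> z; rewrite !inE => zv; apply: le_trans zv (ltW vw).
exists w; first by rewrite inE.
rewrite inE; apply/negP=> wv; have := lt_le_trans vw wv; by rewrite ltxx.
Qed.

Lemma up_cover (z x : P) : z < x -> exists u, covers u z && (u <= x).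
Proof.
move=> zx.
case: (@arg_minnP _ x (fun w => (z < w) && (w <= x)) (fun w => #|dn w|)).
  by rewrite zx lexx.
move=> u /andP[zu ux] Hmin; exists u; rewrite ux andbT /covers zu /=.
apply/forallP=> v; apply/negP=> /andP[zv vu].
have := Hmin v; rewrite zv (le_trans (ltW vu) ux) => /(_ isT).
by move/(leq_trans (dn_lt vu)); rewrite ltnn.
Qed.

Lemma low_cover (z x : P) : z < x -> exists w, covers x w && (z <= w).
Proof.
move=> zx.
case: (@arg_maxnP _ z (fun w => (z <= w) && (w < x)) (fun w => #|dn w|)).
  by rewrite zx lexx.
move=> u /andP[zu ux] Hmax; exists u; rewrite zu andbT /covers ux /=.
apply/forallP=> v; apply/negP=> /andP[uv vx].
have := Hmax v; rewrite vx (le_trans zu (ltW uv)) => /(_ isT).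
by move/(leq_trans (dn_lt uv)); rewrite ltnn.
Qed.

Lemma meet_irr_cover (m u1 u2 : P) : meet_irr m -> covers u1 m -> covers u2 m -> u1 = u2.
Proof.
move=> /cards1P[u Hu] c1 c2.
have : u1 \in [set y | covers y m] by rewrite inE.
have : u2 \in [set y | covers y m] by rewrite inE.
by rewrite Hu !inE => /eqP-> /eqP->.
Qed.

Lemma join_irr_cover (j y1 y2 : P) : join_irr j -> covers j y1 -> covers j y2 -> y1 = y2.
Proof.
move=> /cards1P[u Hu] c1 c2.
have : y1 \in [set y | covers j y] by rewrite inE.
have : y2 \in [set y | covers j y] by rewrite inE.
by rewrite Hu !inE => /eqP-> /eqP->.
Qed.

End Gen.

Section Lat.
Variables (d : Order.disp_t) (L : finLatticeType d).

Lemma lemA (z x y : L) : meet_irr z -> z < x -> z < y -> z < x `&` y.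
Proof.
move=> Hm zx zy.
have [u1 /andP[c1 u1x]] := up_cover zx.
have [u2 /andP[c2 u2y]] := up_cover zy.
have E := meet_irr_cover Hm c1 c2; subst u2.
move: c1 => /andP[zu _]; apply: lt_le_trans zu _.
by rewrite lexI u1x u2y.
Qed.

Lemma KP_meet (x y : L) : ~~ meet_irr x -> ~~ meet_irr y -> ~~ meet_irr (x `&` y).
Proof.
move=> Hx Hy; apply/negP=> Hm.
have hx : x `&` y < x.
  rewrite lt_neqAle leIl andbT; apply/eqP=> E; by rewrite E (negbTE Hx) in Hm.
have hy : x `&` y < y.
  rewrite lt_neqAle leIr andbT; apply/eqP=> E; by rewrite E (negbTE Hy) in Hm.
by have := lemA Hm hx hy; rewrite ltxx.
Qed.

Definition topL (x : L) : L := foldr Order.join x (enum L).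

Lemma le_topL (x z : L) : z <= topL x.
Proof.
rewrite /topL; have : z \in enum L by rewrite mem_enum.
elim: (enum L) => //= a s IH; rewrite inE => /orP[/eqP->|/IH h]; first exact: leUl.
exact: le_trans h (leUr _ _).
Qed.

Lemma top_not_mi (t : L) : (forall z, z <= t) -> ~~ meet_irr t.
Proof.
move=> Ht; rewrite /meet_irr.
suff -> : [set y | covers y t] = set0 by rewrite cards0.
apply/setP=> y; rewrite !inE /covers; apply/negP=> /andP[ty _].
by have := lt_le_trans ty (Ht y); rewrite ltxx.
Qed.

Definition K := {x : L | ~~ meet_irr x}.
End Lat.

HB.instance Definition _ d (L : finLatticeType d) := [isSub of K L for @sval L (fun x => ~~ meet_irr x)].
HB.instance Definition _ d (L : finLatticeType d) := [Finite of K L by <:].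
HB.instance Definition _ d (L : finLatticeType d) := [SubChoice_isSubPOrder of K L by <: with d].

Section KLat.
Variables (d : Order.disp_t) (L : finLatticeType d).

Lemma foldr_KP (t : L) (s : seq L) : ~~ meet_irr t -> all (fun z => ~~ meet_irr z) s ->
  ~~ meet_irr (foldr Order.meet t s).
Proof.
move=> Ht; elim: s => //= a s IH /andP[Ha Hs]; exact: KP_meet Ha (IH Hs).
Qed.

Lemma foldr_lb (w t : L) (s : seq L) : w <= t -> all (fun z => w <= z) s ->
  w <= foldr Order.meet t s.
Proof.
move=> Ht; elim: s => //= a s IH /andP[Ha Hs]; by rewrite lexI Ha IH.
Qed.

Lemma foldr_ub (z t : L) (s : seq L) : z \in s -> foldr Order.meet t s <= z.
Proof.
elim: s => //= a s IH; rewrite inE => /orP[/eqP->|/IH h]; first exact: leIl.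
exact: le_trans (leIr _ _) h.
Qed.

Definition kmeet (x y : K L) : K L := Sub (val x `&` val y) (KP_meet (valP x) (valP y)).

Definition kseq (x y : K L) : seq L :=
  [seq z <- enum L | ~~ meet_irr z && (val x <= z) && (val y <= z)].

Definition kjoinv (x y : K L) : L := foldr Order.meet (topL (val x)) (kseq x y).

Lemma kjoinv_KP x y : ~~ meet_irr (kjoinv x y).
Proof.
apply: foldr_KP; first by apply: top_not_mi; apply: le_topL.
by apply/allP=> z; rewrite mem_filter => /andP[/andP[/andP[]]].
Qed.

Definition kjoin (x y : K L) : K L := Sub (kjoinv x y) (kjoinv_KP x y).

Lemma kmeetP (x y z : K L) : (x <= kmeet y z) = (x <= y) && (x <= z).
Proof. by rewrite !leEsub /kmeet SubK lexI. Qed.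

Lemma kjoinP (x y z : K L) : (kjoin x y <= z) = (x <= z) && (y <= z).
Proof.
rewrite !leEsub /kjoin SubK; apply/idP/andP.
  move=> h; have hx : val x <= kjoinv x y.
    apply: foldr_lb; first exact: le_topL.
    by apply/allP=> w; rewrite mem_filter => /andP[/andP[/andP[]]].
  have hy : val y <= kjoinv x y.
    apply: foldr_lb; first exact: le_topL.
    by apply/allP=> w; rewrite mem_filter => /andP[/andP[/andP[]]].
  by split; [apply: le_trans hx h | apply: le_trans hy h].
move=> [hx hy]; apply: foldr_ub.
by rewrite mem_filter hx hy (valP z) mem_enum.
Qed.

End KLat.

HB.instance Definition _ d (L : finLatticeType d) :=
  Order.POrder_MeetJoin_isLattice.Build d (K L) (@kmeetP d L) (@kjoinP d L).

Lemma valI d (L : finLatticeType d) (x y : K L) : val (x `&` y) = val x `&` val y.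
Proof. by []. Qed.

Theorem corollary2p10 (d : Order.disp_t) (L : finLatticeType d) :
  min_counterexample L ->
  exists j : L, join_irr j /\
    (#|[set m : L | meet_irr m]| < 2 * #|[set m : L | meet_irr m && (j <= m)%O]|)%N.
Proof.
move=> [[n2 Hce] Hmin].
have [a [b [_ _ ab]]] := card_gt1P n2.
set t := topL a.
have Ht : forall z, z <= t := @le_topL d L a.
have [x1 x1t] : exists x1, x1 != t.
  by case: (eqVneq a t) => [E|NE]; [exists b; rewrite -E eq_sym | exists a].
have x1lt : x1 < t by rewrite lt_neqAle x1t Ht.
have [y0 /andP[cy0 _]] := low_cover x1lt.
have miy0 : meet_irr y0.
  apply/cards1P; exists t; apply/setP=> u; rewrite !inE; apply/idP/eqP => [cu|->//].
  move: (cy0) => /andP[_ /forallP /(_ u)]; case/andP: cu => yu _; rewrite yu /=.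
  by move=> H; apply/eqP; move: H; rewrite lt_neqAle Ht andbT negbK.
have cardKs : #|{: K L}| = #|[set x : L | ~~ meet_irr x]|.
  have -> : [set x : L | ~~ meet_irr x] = val @: [set: K L].
    apply/setP => x; rewrite inE; apply/idP/imsetP => [Hx|[y _ ->]]; last exact: (valP y).
    by exists (Sub x Hx); rewrite ?inE ?SubK.
  by rewrite card_imset ?cardsT //; exact: val_inj.
have cardK : (#|{: K L}| + #|[set m : L | meet_irr m]| = #|L|)%N.
  rewrite cardKs -(cardC [set m : L | meet_irr m]) addnC; congr (_ + _).
  by apply: eq_card => x; rewrite !inE.
have hM : (0 < #|[set m : L | meet_irr m]|)%N by apply/card_gt0P; exists y0; rewrite inE.
have ltK : (#|{: K L}| < #|L|)%N by rewrite -cardK -[X in (X < _)%N]addn0 ltn_add2l.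
have nce := Hmin d (K L) ltK.
case: (boolP [exists j' : K L, join_irr j' && (2 * #|upset j'| <= #|{: K L}|)%N]) => Hex; last first.
  have HK1 : (#|{: K L}| <= 1)%N.
    rewrite leqNgt; apply/negP=> h; apply: nce; split=> // j' hj'.
    rewrite ltnNge; apply/negP=> h2; move/negP: Hex; apply; apply/existsP; exists j'.
    by rewrite hj' h2.
  have allt : forall x, ~~ meet_irr x -> x = t.
    move=> x Hx; move: HK1; rewrite cardKs => /card_le1_eqP H.
    by apply: H; rewrite inE //; apply: top_not_mi.
  have yt : forall y, y < t -> meet_irr y.
    move=> y yt; apply/negPn/negP => /allt E; by rewrite E ltxx in yt.
  have jt : join_irr t.
    apply/cards1P; exists y0; apply/setP=> y; rewrite !inE; apply/idP/eqP => [cy|->//].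
    apply/eqP/negPn/negP => ne.
    have y_t : y < t by case/andP: cy.
    have y0_t : y0 < t by case/andP: cy0.
    set z := y `&` y0.
    have zy : z < y.
      rewrite lt_neqAle leIl andbT; apply/eqP=> E.
      have yy0 : y < y0 by rewrite lt_neqAle ne /= -E leIr.
      by move: cy => /andP[_ /forallP /(_ y0)]; rewrite yy0 y0_t.
    have zy0 : z < y0.
      rewrite lt_neqAle leIr andbT; apply/eqP=> E.
      have yy0 : y0 < y by rewrite lt_neqAle eq_sym ne /= -E leIl.
      by move: cy0 => /andP[_ /forallP /(_ y)]; rewrite yy0 y_t.
    have := lemA (yt _ (lt_trans zy y_t)) zy zy0; by rewrite ltxx.
  have := Hce t jt.
  have -> : upset t = [set t].
    by apply/setP=> x; rewrite !inE eq_le Ht.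
  rewrite cards1 => h; lia.
case/existsP: Hex => j' /andP[hj' hcount].
have [c Hc] := cards1P hj'.
have cjc : covers j' c.
  have : c \in [set y | covers j' y] by rewrite Hc inE.
  by rewrite inE.
have hlow : forall w : K L, w < j' -> w <= c.
  move=> w wj; have [y /andP[cy wy]] := low_cover wj.
  by rewrite -(join_irr_cover hj' cy cjc).
have Hcand : (val j' <= val j') && ~~ (val j' <= val c).
  rewrite lexx /=; apply/negP=> h; move: cjc => /andP[cj _].
  by have := lt_le_trans cj h; rewrite ltEsub ltxx.
case: (@arg_minnP _ (val j') (fun z => (z <= val j') && ~~ (z <= val c))
   (fun z => #|dn z|) Hcand) => j /andP[jj' jnc] jmin.
have hbelow : forall y, y < j -> y <= val c.
  move=> y yj; apply/negPn/negP => ync.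
  have := jmin y; rewrite (le_trans (ltW yj) jj') ync => /(_ isT).
  by move/(leq_trans (dn_lt yj)); rewrite ltnn.
have jJ : join_irr j.
  have jcl : j `&` val c < j.
    rewrite lt_neqAle leIl andbT; apply/eqP=> E.
    by move: jnc; rewrite -E leIr.
  have [y1 /andP[cjy1 _]] := low_cover jcl.
  apply/cards1P; exists y1; apply/setP=> y; rewrite !inE; apply/idP/eqP => [cy|->//].
  apply/eqP/negPn/negP => ne.
  have y_j : y < j by case/andP: cy.
  have y1_j : y1 < j by case/andP: cjy1.
  have hy := hbelow _ y_j.
  have hy1 := hbelow _ y1_j.
  set w := y `|` y1.
  have wc : w <= val c by rewrite leUx hy hy1.
  have yw : y < w.
    rewrite lt_neqAle leUl andbT; apply/eqP=> E.
    have y1y : y1 < y by rewrite lt_neqAle eq_sym ne /= E leUr.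
    by move: cjy1 => /andP[_ /forallP /(_ y)]; rewrite y1y y_j.
  have wj : w <= j by rewrite leUx (ltW y_j) (ltW y1_j).
  have wj' : w = j.
    apply/eqP; rewrite eq_le wj /=; apply/negPn/negP => nwj.
    have wlt : w < j by rewrite lt_neqAle wj andbT; apply/eqP=> E; move: nwj; rewrite E lexx.
    by move: cy => /andP[_ /forallP /(_ w)]; rewrite yw wlt.
  by move: jnc; rewrite -wj' wc.
have hii : forall x : K L, j <= val x -> j' <= x.
  move=> x jx; case: (eqVneq (x `&` j') j') => [E|NE]; first by rewrite -E leIl.
  have := hlow (x `&` j'); rewrite lt_neqAle NE leIr => /(_ isT).
  rewrite leEsub => h; case/negP: jnc.
  apply: le_trans _ h; by rewrite valI lexI jx jj'.
have hA : #|upset j'| = #|[set x : L | ~~ meet_irr x & j <= x]|.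
  have -> : [set x : L | ~~ meet_irr x & j <= x] = val @: upset j'.
    apply/setP => x; rewrite inE; apply/andP/imsetP => [[Hx jx]|[y]].
      exists (Sub x Hx); last by rewrite SubK.
      by rewrite inE; apply: hii; rewrite SubK.
    rewrite inE leEsub => hy ->; split; [exact: (valP y) | exact: le_trans jj' hy].
  by rewrite card_imset //; exact: val_inj.
have hsplit : #|upset j| = (#|[set x : L | ~~ meet_irr x & (j <= x)%O]| +
    #|[set m : L | meet_irr m && (j <= m)%O]|)%N.
  rewrite -(cardsID [set m : L | meet_irr m] (upset j)) addnC.
  congr (_ + _); apply: eq_card => x; rewrite !inE andbC //.
have hce := Hce j jJ.
exists j; split => //.
rewrite hA in hcount; rewrite hsplit in hce. rewrite mulnDr in hce. have h4 := leq_trans hce (leq_add hcount (leqnn _)). rewrite -cardK ltn_add2l in h4. exact: h4.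
Qed.
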